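(* For every $h\in\mathcal H$, $T_h:A_h\to\mathcal Y_h$ is a bijection with inverse $S_h$. Moreover: (i) $1-h^\top y>0$ for every $y\in\mathcal Y_h$ (so $S_h$ is well defined on $\mathcal Y_h$); (ii) $S_h(\mathcal Y_h)\subseteq\mathcal X_d$ and $T_h(A_h)\subseteq\mathcal Y_h$; (iii) if $h$ lies in the interior of $\mathcal H$, then $A_h=\mathcal X_d$; (iv) if $h$ lies in the boundary of $\mathcal H$, then $\mathcal Y_h$ is unbounded.
   Context: Fix an integer $d\ge 2$. Let $H\in\mathbb R^{d\times(d-1)}$ have orthonormal columns spanning $T_d:=\{u\in\mathbb R^d:\mathbf 1^\top u=0\}$, and set $\gamma_i:=H^\top e_i\in\mathbb R^{d-1}$ ($i=1,\dots,d$); then $\sum_i\gamma_i=0$ and $\gamma_i^\top\gamma_j=\delta_{ij}-1/d$. Let $\mathcal X_d:=\{x\in\mathbb R^{d-1}:1+\gamma_i^\top x\ge0\ \forall i\}$ and $\mathcal H:=\mathrm{conv}\{\gamma_1,\dots,\gamma_d\}$. For $h\in\mathcal H$ define $A_h:=\{x\in\mathcal X_d:1+h^\top x>0\}$, $\mathcal Y_h:=\{y\in\mathbb R^{d-1}:1+(\gamma_i-h)^\top y\ge 0\ \forall i\}$, $T_h(x):=x/(1+h^\top x)$ for $x\in A_h$, and $S_h(y):=y/(1-h^\top y)$ for $y\in\mathcal Y_h$. *)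

(* Defs.v *)
From HB Require Import structures.
From mathcomp Require Import all_boot all_order all_algebra.
From mathcomp Require Import all_classical all_reals all_analysis.
Set Implicit Arguments. Unset Strict Implicit. Unset Printing Implicit Defensive.
Import Order.TTheory GRing.Theory Num.Theory.
Import numFieldNormedType.Exports.
Local Open Scope classical_set_scope.
Local Open Scope ring_scope.

Section Defs.
Variables (R : realType) (d : nat).
Notation V := 'cV[R]_(d.-1).

Definition dotv (u v : V) : R := (u^T *m v) 0 0.

Definition gamma (H : 'M[R]_(d, d.-1)) (i : 'I_d) : V :=
  H^T *m (delta_mx i 0 : 'cV[R]_d).

Definition Xd (H : 'M[R]_(d, d.-1)) : set V :=
  [set x | forall i, 0 <= 1 + dotv (gamma H i) x].

Definition Hconv (H : 'M[R]_(d, d.-1)) : set V :=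
  [set h | exists lam : 'I_d -> R, (forall i, 0 <= lam i) /\
     \sum_i lam i = 1 /\ h = \sum_i lam i *: gamma H i].

Definition Aset (H : 'M[R]_(d, d.-1)) (h : V) : set V :=
  [set x | Xd H x /\ 0 < 1 + dotv h x].

Definition Yset (H : 'M[R]_(d, d.-1)) (h : V) : set V :=
  [set y | forall i, 0 <= 1 + dotv (gamma H i - h) y].

Definition Tmap (h x : V) : V := (1 + dotv h x)^-1 *: x.
Definition Smap (h y : V) : V := (1 - dotv h y)^-1 *: y.

Definition bdry (A : set V) : set V := closure A `\` interior A.
End Defs.

(* Main.v *)
Require Import Defs.
From HB Require Import structures.
From mathcomp Require Import all_boot all_order all_algebra.
From mathcomp Require Import all_classical all_reals all_analysis.
From mathcomp Require Import ring lra.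
Import Order.TTheory GRing.Theory Num.Theory.
Import numFieldNormedType.Exports.
Local Open Scope classical_set_scope.
Local Open Scope ring_scope.

Section Aux.
Variables (R : realType) (d : nat) (H : 'M[R]_(d, d.-1)).
Notation V := 'cV[R]_(d.-1).

Lemma dotvE (u v : V) : dotv u v = \sum_j u j 0 * v j 0.
Proof. by rewrite /dotv !mxE; apply: eq_bigr => j _; rewrite !mxE. Qed.

Lemma dotvC (u v : V) : dotv u v = dotv v u.
Proof. by rewrite !dotvE; apply: eq_bigr => j _; rewrite mulrC. Qed.

Lemma dotvDl (u v x : V) : dotv (u + v) x = dotv u x + dotv v x.
Proof. by rewrite !dotvE -big_split; apply: eq_bigr => j _; rewrite !mxE mulrDl. Qed.

Lemma dotvNl (u x : V) : dotv (- u) x = - dotv u x.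
Proof. by rewrite !dotvE -sumrN; apply: eq_bigr => j _; rewrite !mxE mulNr. Qed.

Lemma dotvBl (u v x : V) : dotv (u - v) x = dotv u x - dotv v x.
Proof. by rewrite dotvDl dotvNl. Qed.

Lemma dotvZl a (u x : V) : dotv (a *: u) x = a * dotv u x.
Proof. by rewrite !dotvE mulr_sumr; apply: eq_bigr => j _; rewrite !mxE mulrA. Qed.

Lemma dotvZr a (u x : V) : dotv u (a *: x) = a * dotv u x.
Proof. by rewrite dotvC dotvZl dotvC. Qed.


Lemma dotv_suml (I : finType) (F : I -> V) x : dotv (\sum_i F i) x = \sum_i dotv (F i) x.
Proof.
rewrite dotvE; under eq_bigr do rewrite summxE mulr_suml.
by rewrite exchange_big /=; apply: eq_bigr => i _; rewrite dotvE.
Qed.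

Lemma dotv0r (u : V) : dotv u 0 = 0.
Proof. by rewrite dotvE big1 // => j _; rewrite mxE mulr0. Qed.

Lemma gammaE i a b : gamma H i a b = H i a.
Proof. by rewrite /gamma -trmx_delta -trmx_mul -rowE !mxE. Qed.

Lemma dotv_gamma i (x : V) : dotv (gamma H i) x = (H *m x) i 0.
Proof. by rewrite dotvE mxE; apply: eq_bigr => j _; rewrite gammaE. Qed.

Lemma entry_le m n (v : 'M[R]_(m, n)) i j : `|v i j| <= `|v|.
Proof.
by rewrite [leRHS]/Num.Def.normr /= mx_normrE; apply/bigmax_geP; right => /=; exists (i, j).
Qed.

Lemma HTv (v : 'cV[R]_d) : H^T *m v = \sum_i v i 0 *: gamma H i.
Proof.
apply/matrixP => a b; rewrite summxE [LHS]mxE; apply: eq_bigr => i _.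
by rewrite mxE [RHS]mxE gammaE (ord1 b) mulrC. Qed.



Lemma dotv_self (x : V) : dotv x x = 0 -> x = 0.
Proof.
rewrite dotvE => /eqP; rewrite psumr_eq0 => [/allP hx|j _]; last by rewrite -expr2 sqr_ge0.
apply/matrixP => a b; rewrite (ord1 b) mxE.
by have := hx a (mem_index_enum _); rewrite mulf_eq0 orbb => /eqP.
Qed.

Hypothesis hd : (2 <= d)%N.
Hypothesis hHH : H^T *m H = 1%:M.
Hypothesis hT : forall u : 'cV[R]_d,
      ((const_mx 1 : 'cV[R]_d)^T *m u = 0) <-> exists c : 'cV[R]_(d.-1), u = H *m c.

Lemma hsum (x : V) : \sum_i (H *m x) i 0 = 0.
Proof.
have E := (hT (H *m x)).2 (ex_intro _ x erefl).
have := congr1 (fun M : 'M[R]_1 => M 0 0) E; rewrite !mxE => E1; apply: etrans E1.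
by apply: eq_bigr => j _; rewrite !mxE mul1r.
Qed.

Lemma sum_gamma_dot (y : V) : \sum_i dotv (gamma H i) y = 0.
Proof. by apply: etrans (hsum y); apply: eq_bigr => i _; rewrite dotv_gamma. Qed.

Lemma HT1 : H^T *m (const_mx 1 : 'cV[R]_d) = 0.
Proof.
apply/matrixP => a b; rewrite !mxE; apply: etrans (hsum (delta_mx a 0)).
by apply: eq_bigr => i _; rewrite -colE !mxE mulr1.
Qed.

Lemma sum_gamma : \sum_i gamma H i = 0.
Proof.
apply: (etrans _ HT1); rewrite HTv; apply: eq_bigr => i _; by rewrite mxE scale1r.
Qed.

Lemma dn0 : (d%:R : R) != 0.
Proof. by rewrite pnatr_eq0 -lt0n (leq_trans _ hd). Qed.

Lemma gamma_gamma k i : dotv (gamma H k) (gamma H i) = (k == i)%:R - (d%:R)^-1.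
Proof.
set w : 'cV[R]_d := delta_mx i 0 - (d%:R)^-1 *: const_mx 1.
have w0 : (const_mx 1 : 'cV[R]_d)^T *m w = 0.
  apply/matrixP => a b; rewrite (ord1 a) (ord1 b) !mxE.
  under eq_bigr do rewrite !mxE mul1r.
  rewrite sumrB sumr_const card_ord (bigD1 i) //= eqxx big1 /=.
    by rewrite addr0 mulr1 -[d%:R^-1 *+ d]mulr_natr mulVf ?dn0 // subrr.
  by move=> j /negbTE ->.
have [c wc] := (hT w).1 w0.
have gc : gamma H i = c.
  rewrite /gamma; have -> : (delta_mx i 0 : 'cV[R]_d) = w + (d%:R)^-1 *: const_mx 1.
    by rewrite /w subrK.
  by rewrite mulmxDr -scalemxAr HT1 scaler0 addr0 wc mulmxA hHH mul1mx.
by rewrite dotv_gamma gc -wc /w !mxE eqxx andbT mulr1.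
Qed.

Lemma Hconv_coord h lam : (forall i, 0 <= lam i) -> \sum_i lam i = 1 ->
  h = \sum_i lam i *: gamma H i -> forall k, (H *m h) k 0 = lam k - (d%:R)^-1.
Proof.
move=> _ s1 -> k; rewrite -dotv_gamma dotvC dotv_suml.
under eq_bigr do rewrite dotvZl dotvC gamma_gamma mulrBr.
rewrite sumrB -mulr_suml s1 mul1r (bigD1 k) //= eqxx mulr1 big1 ?addr0 //.
by move=> j; rewrite eq_sym => /negbTE ->; rewrite mulr0.
Qed.

Lemma conv_nonneg h x : Hconv H h -> Xd H x -> 0 <= 1 + dotv h x.
Proof.
move=> [lam [l0 [s1 ->]]] Xx.
have -> : 1 + dotv (\sum_i lam i *: gamma H i) x = \sum_i lam i * (1 + dotv (gamma H i) x).
  rewrite dotv_suml; under [RHS]eq_bigr do rewrite mulrDr mulr1.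
  by rewrite big_split /= s1; congr (_ + _); apply: eq_bigr => i _; rewrite dotvZl.
by apply: sumr_ge0 => i _; apply: mulr_ge0.
Qed.

Lemma dinv_lt1 : (d%:R : R)^-1 < 1.
Proof. by rewrite invf_lt1 ?ltr0n ?ltr1n // (leq_trans _ hd). Qed.

Lemma main h : Hconv H h ->
  [/\ ((forall x, Aset H h x -> Yset H h (Tmap h x) /\ Smap h (Tmap h x) = x) /\
       (forall y, Yset H h y -> Aset H h (Smap h y) /\ Tmap h (Smap h y) = y)),
      (forall y, Yset H h y -> 0 < 1 - dotv h y),
      (Smap h @` Yset H h `<=` Xd H /\ Tmap h @` Aset H h `<=` Yset H h),
      (interior (Hconv H) h -> Aset H h = Xd H) &
      (bdry (Hconv H) h -> ~ bounded_set (Yset H h))].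
Proof.
move=> hconv; have [lam [l0 [s1 hE]]] := hconv.
have hdot y : dotv h y = \sum_i lam i * dotv (gamma H i) y.
  by rewrite hE dotv_suml; apply: eq_bigr => i _; rewrite dotvZl.
have pos y : Yset H h y -> 0 < 1 - dotv h y.
  move=> Yy; rewrite ltNge; apply/negP => t0.
  have g0 i : 0 <= dotv (gamma H i) y.
    by have := Yy i; rewrite dotvBl => Y; lra.
  have gz i : dotv (gamma H i) y = 0.
    have /eqP := sum_gamma_dot y; rewrite psumr_eq0 => [/allP/(_ i (mem_index_enum _))/eqP //|j _].
    exact: g0.
  move: t0; rewrite hdot big1 => [|i _]; first by rewrite subr0 ler10.
  by rewrite gz mulr0.
have TS x : Aset H h x -> Yset H h (Tmap h x) /\ Smap h (Tmap h x) = x.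
  move=> [Xx sx]; split.
  - move=> i; rewrite /Tmap dotvZr dotvBl.
    have := Xx i; set g := dotv (gamma H i) x; set a := dotv h x => gi.
    have sa : 1 + a != 0 by rewrite lt0r_neq0.
    have -> : 1 + (1 + a)^-1 * (g - a) = (1 + g) / (1 + a) by field.
    by apply: divr_ge0 => //; apply: ltW.
  - rewrite /Smap /Tmap dotvZr scalerA.
    set a := dotv h x.
    have sa : 1 + a != 0 by rewrite lt0r_neq0.
    have -> : 1 - (1 + a)^-1 * a = (1 + a)^-1 by field.
    by rewrite invrK mulfV ?scale1r.
have ST y : Yset H h y -> Aset H h (Smap h y) /\ Tmap h (Smap h y) = y.
  move=> Yy; have ty := pos y Yy; set b := dotv h y in ty.
  have sb : 1 - b != 0 by rewrite lt0r_neq0.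
  split; [split|].
  - move=> i; rewrite /Smap dotvZr; have := Yy i; rewrite dotvBl -/b.
    set g := dotv (gamma H i) y => gi.
    have -> : 1 + (1 - b)^-1 * g = (1 + (g - b)) / (1 - b) by field.
    by apply: divr_ge0 => //; apply: ltW.
  - rewrite /Smap dotvZr -/b.
    have -> : 1 + (1 - b)^-1 * b = (1 - b)^-1 by field.
    by rewrite invr_gt0.
  - rewrite /Tmap /Smap dotvZr -/b scalerA.
    have -> : 1 + (1 - b)^-1 * b = (1 - b)^-1 by field.
    by rewrite invrK mulfV ?scale1r.
split.
- by split; [exact TS|exact ST].
- exact pos.
- split; first by move=> _ [y Yy <-]; case: (ST y Yy) => [[]].
  by move=> _ [x Ax <-]; case: (TS x Ax).
- move=> hint; apply/seteqP; split; first by move=> x [].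
  move=> x Xx; split=> //.
  rewrite lt_neqAle conv_nonneg // andbT; apply/eqP => /esym s0.
  have x0 : x != 0.
    by apply/eqP => x0; move: s0; rewrite x0 dotv0r addr0 => /eqP; rewrite oner_eq0.
  have q0 : 0 < dotv x x.
    rewrite lt_neqAle; apply/andP; split.
      by apply/eqP => /esym /dotv_self /eqP; rewrite (negbTE x0).
    by rewrite dotvE; apply: sumr_ge0 => j _; rewrite -expr2 sqr_ge0.
  move/nbhs_normP: hint => [e e0 sub]; have e0p : 0 < e := e0.
  have nx : 0 <= `|x| := normr_ge0 x.
  set eps := e / 2 / (`|x| + 1).
  have nx1 : `|x| + 1 != 0 by rewrite lt0r_neq0 //; lra.
  have eps0 : 0 < eps by rewrite /eps; apply: divr_gt0; [apply: divr_gt0|] => //; lra.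
  have epsE : eps * (`|x| + 1) = e / 2 by rewrite /eps; field.
  have hb : ball_ (fun v => `|v|) h e (h - eps *: x).
    rewrite /ball_ /= opprB addrC subrK normrZ gtr0_norm //; nra.
  have := @conv_nonneg _ x (sub _ hb) Xx; rewrite dotvDl dotvNl dotvZl; nra.
- move=> [_ nint] bnd.
  have [k lk0] : exists k, lam k = 0.
    apply: contrapT => nex; apply: nint.
    have lp i : 0 < lam i.
      rewrite lt_neqAle l0 andbT eq_sym; apply/eqP => li; apply: nex; by exists i.
    have near_i i : \forall h' \near h, 0 <= (d%:R)^-1 + (H *m h') i 0.
      apply/nbhs_normP.
      have sC : 0 <= \sum_j `|H i j| by apply: sumr_ge0 => j _.
      set C := \sum_j `|H i j| + 1.
      have C0 : 0 < C by rewrite /C; lra.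
      exists (lam i / C); first by rewrite /= divr_gt0.
      move=> h' /= hb.
      have -> : (H *m h') i 0 = (H *m h) i 0 - (H *m (h - h')) i 0.
        by rewrite mulmxBr !mxE opprB addrC subrK.
      rewrite (@Hconv_coord _ _ l0 s1 hE i).
      have nv : 0 <= `|h - h'| := normr_ge0 _.
      have bound : `|(H *m (h - h')) i 0| <= C * `|h - h'|.
        rewrite mxE; apply: le_trans (ler_norm_sum _ _ _) _.
        apply: (@le_trans _ _ (\sum_j `|H i j| * `|h - h'|)).
          apply: ler_sum => j _; rewrite normrM; apply: ler_wpM2l => //.
          exact: entry_le.
        by rewrite -mulr_suml /C mulrDl mul1r; lra.
      move: hb; rewrite ltr_pdivlMr // mulrC => hb.
      move: bound; rewrite ler_norml => /andP[b1 b2]; lra.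
    have N := filter_forall (nbhs_filter h) near_i; change (nbhs h (Hconv H)); apply: filterS N => h' hp.
    exists (fun i => (d%:R)^-1 + (H *m h') i 0); split => //; split.
      rewrite big_split /= hsum addr0 sumr_const card_ord.
      by rewrite -[d%:R^-1 *+ d]mulr_natr mulVf ?dn0.
    under eq_bigr do rewrite scalerDl.
    rewrite big_split /= -scaler_sumr sum_gamma scaler0 add0r.
    by rewrite -(HTv (H *m h')) mulmxA hHH mul1mx.
  have gk : gamma H k != 0.
    apply/eqP => g0; have := gamma_gamma k k; rewrite g0 dotv0r eqxx /= mulr1n.
    have := dinv_lt1; lra.
  have Yt t : 0 <= t -> Yset H h (t *: gamma H k).
    move=> t0 i; rewrite dotvZr dotvBl gamma_gamma [dotv h _]dotvC dotv_gamma.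
    rewrite (@Hconv_coord _ _ l0 s1 hE k) lk0 sub0r opprK subrK.
    by apply: addr_ge0 => //; apply: mulr_ge0.
  have [M [_ HM]] := bnd.
  have nk : 0 < `|gamma H k| by rewrite normr_gt0.
  set t := (`|M| + 2) / `|gamma H k|.
  have t0 : 0 <= t by rewrite /t divr_ge0 // addr_ge0.
  have := HM (M + 1); rewrite ltrDl => /(_ ltr01 (t *: gamma H k) (Yt t t0)) /=.
  rewrite normrZ ger0_norm // /t divfK ?lt0r_neq0 //.
  have := ler_norm M; lra.
Qed.
End Aux.
Theorem proposition3p2 (R : realType) (d : nat) (H : 'M[R]_(d, d.-1)) :
  (2 <= d)%N ->
  H^T *m H = 1%:M ->
  (forall u : 'cV[R]_d,
      ((const_mx 1 : 'cV[R]_d)^T *m u = 0) <-> exists c : 'cV[R]_(d.-1), u = H *m c) ->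
  forall h : 'cV[R]_(d.-1), Hconv H h ->
  [/\ (* T_h : A_h -> Y_h bijection with inverse S_h *)
      ((forall x, Aset H h x -> Yset H h (Tmap h x) /\ Smap h (Tmap h x) = x) /\
       (forall y, Yset H h y -> Aset H h (Smap h y) /\ Tmap h (Smap h y) = y)),
      (* (i) *)
      (forall y, Yset H h y -> 0 < 1 - dotv h y),
      (* (ii) *)
      (Smap h @` Yset H h `<=` Xd H /\ Tmap h @` Aset H h `<=` Yset H h),
      (* (iii) *)
      (interior (Hconv H) h -> Aset H h = Xd H) &
      (* (iv) *)
      (bdry (Hconv H) h -> ~ bounded_set (Yset H h))].
Proof. by move=> hd hHH hT h; exact: main. Qed.
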